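(* Let $d\ge3$, $\gamma\in[1,2]$, $\rho_0>0$, and let $\rho$ be the Lane–Emden profile with central density $\rho_0$ on $[0,R_g)$. Then for all $r\in[0,R_g)$: if $\gamma\in[1,2)$, $\rho(r)\le\Big(\rho_0^{-(2-\gamma)}+\frac{2\pi}{d}\frac{2-\gamma}{\gamma}r^2\Big)^{-1/(2-\gamma)}$; if $\gamma=2$, $\rho(r)\le\exp\big(\ln\rho_0-\frac{2\pi}{d}\frac{1}{\gamma}r^2\big)=\rho_0e^{-\pi r^2/d}$. Equivalently, for $\gamma>1$ with $w=\rho^{\gamma-1}$, $w_0=\rho_0^{\gamma-1}$, $\alpha=1/(\gamma-1)$: $w(r)\le\big(w_0^{-(\alpha-1)}+\frac{2\pi}{d}\frac{2-\gamma}{\gamma}r^2\big)^{-1/(\alpha-1)}$ if $\alpha\ne1$ and $w(r)\le\exp\big(\ln w_0-\frac{2\pi}{d}\frac{\gamma-1}{\gamma}r^2\big)$ if $\alpha=1$; and for $\gamma=1$ with $h=\ln\rho$, $h_0=\ln\rho_0$: $h(r)\le-\ln\big(e^{-h_0}+\frac{2\pi}{d}r^2\big)$.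
   Context: Fix an integer $d\ge 3$ and $\gamma\in[1,2]$. For $\rho_0>0$, the (radial, gaseous) Lane–Emden profile with central density $\rho_0$ is the unique continuous function $\rho:[0,R_g)\to(0,\infty)$, defined on its maximal interval of existence $[0,R_g)$, $R_g\in(0,\infty]$, with $\rho(0)=\rho_0$ and, writing $m(r)=4\pi\int_0^r y^{d-1}\rho(y)\,dy$, $\frac{d}{dr}\big(\rho(r)^\gamma\big)=-\rho(r)\,m(r)/r^{d-1}$ for $0<r<R_g$ (equivalently: for $\gamma>1$, $w=\rho^{\gamma-1}$ satisfies $w'(r)=-4\pi\frac{\gamma-1}{\gamma}r^{1-d}\int_0^r y^{d-1}w(y)^{\alpha}dy$ with $\alpha=1/(\gamma-1)$; for $\gamma=1$, $h=\ln\rho$ satisfies $h'(r)=-4\pi r^{1-d}\int_0^r y^{d-1}e^{h(y)}dy$). *)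

(* Defs.v *)
From Stdlib Require Import Reals.
From Coquelicot Require Import Coquelicot.
Open Scope R_scope.

Definition LE_mass (d : nat) (rho : R -> R) (r : R) : R :=
  4 * PI * RInt (fun y => y ^ (d - 1) * rho y) 0 r.

Definition LE_solution (d : nat) (gamma rho0 : R) (Rg : Rbar) (rho : R -> R) : Prop :=
  Rbar_lt (Finite 0) Rg /\
  rho 0 = rho0 /\
  (forall r, 0 <= r -> Rbar_lt (Finite r) Rg -> 0 < rho r) /\
  filterlim rho (at_right 0) (locally (rho 0)) /\
  (forall r, 0 < r -> Rbar_lt (Finite r) Rg -> continuous rho r) /\
  (forall r, 0 < r -> Rbar_lt (Finite r) Rg ->
     is_derive (fun s => Rpower (rho s) gamma) r
               (- rho r * LE_mass d rho r / r ^ (d - 1))).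

(* the Lane-Emden profile: a solution on its maximal interval of existence,
   i.e. no solution with the same central density lives on a strictly larger
   interval [0, R') with R' > Rg. *)
Definition LE_profile (d : nat) (gamma rho0 : R) (Rg : Rbar) (rho : R -> R) : Prop :=
  LE_solution d gamma rho0 Rg rho /\
  ~ (exists (R' : Rbar) (rho' : R -> R),
        Rbar_lt Rg R' /\ LE_solution d gamma rho0 R' rho').

(* Main.v *)
Require Import Defs.
From Stdlib Require Import Reals Lra Lia.
From Coquelicot Require Import Coquelicot.
Open Scope R_scope.

Lemma mono_lemma (F dF : R -> R) a b : a <= b ->
  (forall x, a < x < b -> is_derive F x (dF x)) ->
  (forall x, a <= x <= b -> continuous F x) ->
  (forall x, a < x < b -> 0 <= dF x) -> F a <= F b.
Proof.
  intros hab hd hc hp.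
  destruct (Req_dec a b) as [->|hne]; [lra|].
  destruct (MVT_gen F a b (fun x => Rmax 0 (dF x))) as [c [hc1 hc2]].
  - rewrite Rmin_left, Rmax_right by lra. intros x hx.
    rewrite Rmax_right by (apply hp; lra). apply hd; lra.
  - rewrite Rmin_left, Rmax_right by lra. intros x hx.
    apply continuity_pt_filterlim. apply hc; lra.
  - assert (0 <= Rmax 0 (dF c)) by apply Rmax_l.
    assert (0 <= Rmax 0 (dF c) * (b - a)) by (apply Rmult_le_pos; lra). lra.
Qed.

Lemma Rpower_le_inv x y a: 0<x -> 0<y -> 0<a -> Rpower x a <= Rpower y a -> x <= y.
Proof.
  unfold Rpower. intros hx hy ha h.
  destruct (Rle_lt_dec x y) as [|hl]; auto. exfalso.
  assert (ln y < ln x) by (apply ln_increasing; lra).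
  assert (a * ln y < a * ln x) by (apply Rmult_lt_compat_l; lra).
  assert (exp (a * ln y) < exp (a*ln x)) by (apply exp_increasing; lra). lra.
Qed.

Lemma alg1 q e2 rho m A x D: 0<q -> 0<rho -> 0<A -> 0<x -> 0<D -> e2*rho*rho = 1 ->
  m >= 4*PI*(rho*(A*x)/D) -> 0 <= q*e2*rho*m/A - 2*PI/D*q*(2*x).
Proof.
  intros hq hr hA hx hD he hm.
  assert (he2 : 0 < e2).
  { destruct (Rlt_le_dec 0 e2); auto. assert (e2*rho*rho <= 0). 
    replace (e2*rho*rho) with (e2*(rho*rho)) by ring.
    apply Rmult_le_0_r; [lra| nra]. lra. }
  assert (q*e2*rho*m/A >= q*e2*rho*(4*PI*(rho*(A*x)/D))/A).
  { unfold Rdiv. apply Rle_ge. apply Rmult_le_compat_r. apply Rlt_le, Rinv_0_lt_compat; auto.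
    apply Rmult_le_compat_l. repeat apply Rmult_le_pos; lra. lra. }
  replace (q*e2*rho*(4*PI*(rho*(A*x)/D))/A) with (q*(e2*rho*rho)*4*PI*x/D) in H by (field; lra).
  rewrite he in H. replace (2*PI/D*q*(2*x)) with (q*1*4*PI*x/D) by (field; lra). lra.
Qed.
Lemma deriv_H1 (P : R -> R) x dP a c : is_derive P x dP -> 0 < P x ->
 is_derive (fun t => exp (a * ln (P t)) - c * t^2) x (exp (a * ln (P x)) * (a * (dP / P x)) - c * (2 * x)).
Proof. intros HP HPpos. assert (ex_derive P x) by (exists dP; exact HP).
auto_derive. auto. replace (Derive (fun x0 => P x0) x) with dP by (symmetry; apply is_derive_unique; exact HP). field. lra. Qed.
Lemma int_pow d c s: (1<=d)%nat -> RInt (fun y => y^(d-1)*c) 0 s = c * s^d / INR d.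
Proof. intros Hd.
 apply is_RInt_unique.
 assert (HD : INR d <> 0) by (apply not_0_INR; lia).
 replace (c * s ^ d / INR d) with (minus (c * s^d/INR d) (c*0^d/INR d)).
 apply (is_RInt_derive (fun y => c*y^d/INR d)).
 intros. auto_derive. auto. replace (pred d) with (d-1)%nat by lia. field. auto.
 intros. apply (ex_derive_continuous (fun y:R => y^(d-1)*c)). auto_derive. auto.
 rewrite pow_i by lia. unfold minus, plus, opp; simpl. field. auto.
Qed.
Lemma deriv_H2 (P : R -> R) x dP a c : is_derive P x dP -> 0 < P x ->
 is_derive (fun t => -(a * ln (P t)) - c * t^2) x (-(a * (dP / P x)) - c * (2 * x)).
Proof. intros HP HPpos. assert (ex_derive P x) by (exists dP; exact HP).
auto_derive. auto. replace (Derive (fun x0 => P x0) x) with dP by (symmetry; apply is_derive_unique; exact HP). field. lra. Qed.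

Lemma cont1 (g : R -> R) k c x : continuous g x -> 0 < g x ->
  continuous (fun t => exp (-k * ln (g t)) - c * t^2) x.
Proof. intros hc hp.
  apply (continuous_minus (V:=R_NormedModule) (fun t => exp (-k * ln (g t))) (fun t => c * t^2)).
  - apply (continuous_comp g (fun y => exp (-k * ln y))). auto.
    apply (ex_derive_continuous (fun y => exp (-k * ln y))). auto_derive. auto.
  - apply (ex_derive_continuous (fun t:R => c * t^2)). auto_derive. auto.
Qed.
Lemma cont2 (g : R -> R) c x : continuous g x -> 0 < g x ->
  continuous (fun t => - ln (g t) - c * t^2) x.
Proof. intros hc hp.
  apply (continuous_minus (V:=R_NormedModule) (fun t => - ln (g t)) (fun t => c * t^2)).
  - apply (continuous_comp g (fun y => - ln y)). auto.
    apply (ex_derive_continuous (fun y => - ln y)). auto_derive. auto.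
  - apply (ex_derive_continuous (fun t:R => c * t^2)). auto_derive. auto.
Qed.
Lemma exp_le_mono x y : x <= y -> exp x <= exp y.
Proof. intros h. destruct (Rle_lt_or_eq_dec x y h) as [h'|h'].
  left; apply exp_increasing; auto. right; subst; auto. Qed.

Theorem mainTheorem6 (d : nat) (gamma rho0 : R) (Rg : Rbar) (rho : R -> R) :
  (3 <= d)%nat -> 1 <= gamma <= 2 -> 0 < rho0 ->
  LE_profile d gamma rho0 Rg rho ->
  forall r, 0 <= r -> Rbar_lt (Finite r) Rg ->
    (gamma < 2 ->
       rho r <= Rpower (Rpower rho0 (- (2 - gamma))
                        + 2 * PI / INR d * ((2 - gamma) / gamma) * r ^ 2)
                       (- (1 / (2 - gamma)))) /\
    (gamma = 2 ->
       rho r <= exp (ln rho0 - 2 * PI / INR d * (1 / gamma) * r ^ 2)).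
Proof.
  intros Hd Hg H0 [[HRg [Hr0 [Hpos [Hc0 [Hc HD]]]]] _] r Hr HrR.
  set (g := fun y => rho (Rmax 0 y)).
  assert (Hlt : forall t, t <= r -> Rbar_lt (Finite t) Rg).
  { intros t ht. eapply Rbar_le_lt_trans; [|exact HrR]. simpl. exact ht. }
  assert (Hgeq : forall t, 0 <= t -> g t = rho t).
  { intros t ht. unfold g. rewrite Rmax_right by lra. reflexivity. }
  assert (Hg0 : g 0 = rho0). { rewrite Hgeq by lra. exact Hr0. }
  assert (Hgpos : forall t, t <= r -> 0 < g t).
  { intros t ht. destruct (Rle_dec 0 t).
    - rewrite Hgeq by lra. apply Hpos; auto.
    - unfold g. rewrite Rmax_left by lra. apply Hpos. lra. apply Hlt. lra. }
  assert (Hgc : forall t, t <= r -> continuous g t).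
  { intros t ht. destruct (Rtotal_order t 0) as [hn|[he|hp]].
    - apply (continuous_ext_loc _ (fun _ => rho 0)).
      + apply (filter_imp (fun u => u < 0)). intros u hu. unfold g. rewrite Rmax_left by lra. reflexivity.
        apply open_lt. exact hn.
      + apply continuous_const.
    - subst t. intros P [eps Heps]. unfold filtermap.
      destruct (proj1 (filterlim_locally rho (rho 0)) Hc0 eps) as [del Hdel].
      exists del. intros u hu. apply Heps. unfold g. destruct (Rle_dec u 0).
      + rewrite (Rmax_left 0 u) by lra. rewrite (Rmax_left 0 0) by lra. apply ball_center.
      + rewrite (Rmax_right 0 u) by lra. rewrite (Rmax_left 0 0) by lra. apply Hdel; auto; lra.
    - apply (continuous_ext_loc _ rho).
      + apply (filter_imp (fun u => 0 < u)). intros u hu. unfold g. rewrite Rmax_right by lra. reflexivity.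
        apply open_gt. exact hp.
      + apply Hc; auto. }
  assert (Hex : forall s, 0 <= s <= r -> ex_RInt (fun y => y^(d-1)*rho y) 0 s).
  { intros s hs. apply (ex_RInt_ext (fun y => y^(d-1)*g y)).
    - intros y hy. rewrite Rmin_left, Rmax_right in hy by lra. rewrite Hgeq by lra. reflexivity.
    - apply (ex_RInt_continuous (V:=R_CompleteNormedModule)). intros z hz. rewrite Rmin_left, Rmax_right in hz by lra.
      apply (continuous_mult (fun y => y^(d-1)) g).
      + apply (ex_derive_continuous (fun y:R => y^(d-1))). auto_derive. auto.
      + apply Hgc; lra. }
  assert (Hmpos : forall s, 0 < s <= r -> 0 <= LE_mass d rho s).
  { intros s hs. unfold LE_mass. apply Rmult_le_pos.
    - generalize PI_RGT_0; lra.
    - apply RInt_ge_0. lra. apply Hex; lra. intros y hy.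
      apply Rmult_le_pos. apply pow_le; lra. apply Rlt_le, Hpos. lra. apply Hlt. lra. }
  assert (Hdec : forall y s, 0 < y -> y <= s -> s <= r -> rho s <= rho y).
  { intros y s hy hys hsr.
    assert (- Rpower (rho y) gamma <= - Rpower (rho s) gamma).
    { apply (mono_lemma (fun x => - Rpower (rho x) gamma) (fun x => rho x * LE_mass d rho x / x^(d-1))); auto.
      - intros x hx. pose proof (is_derive_opp _ _ _ (HD x ltac:(lra) (Hlt x ltac:(lra)))) as h.
        replace (rho x * LE_mass d rho x / x ^ (d - 1)) with (opp (- rho x * LE_mass d rho x / x ^ (d - 1))).
        exact h. unfold opp; simpl. field. apply pow_nonzero. lra.
      - intros x hx. apply (ex_derive_continuous (fun x => - Rpower (rho x) gamma)).
        eexists. apply (is_derive_opp (fun x => Rpower (rho x) gamma)). apply HD; [lra|]. apply Hlt; lra.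
      - intros x hx. unfold Rdiv. apply Rmult_le_pos. apply Rmult_le_pos.
        apply Rlt_le, Hpos. lra. apply Hlt; lra. apply Hmpos; lra.
        apply Rlt_le, Rinv_0_lt_compat, pow_lt; lra. }
    apply (Rpower_le_inv _ _ gamma). apply Hpos; [lra|apply Hlt; lra]. apply Hpos; [lra|apply Hlt; lra]. lra. lra. }
  assert (Hmlb : forall s, 0 < s <= r -> LE_mass d rho s >= 4*PI*(rho s*(s^(d-1)*s)/INR d)).
  { intros s hs. unfold LE_mass. apply Rle_ge, Rmult_le_compat_l. generalize PI_RGT_0; lra.
    assert (HDn : INR d <> 0) by (apply not_0_INR; lia).
    replace (rho s * (s^(d-1)*s)/INR d) with (RInt (fun y => y^(d-1)*rho s) 0 s).
    - apply RInt_le. lra.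
      + apply (ex_RInt_continuous (V:=R_CompleteNormedModule)). intros z hz.
        apply (ex_derive_continuous (fun y:R => y^(d-1)*rho s)). auto_derive. auto.
      + apply Hex; lra.
      + intros y hy. apply Rmult_le_compat_l. apply pow_le; lra. apply Hdec; lra.
    - rewrite int_pow by lia. assert (s^d = s^(d-1)*s) by (replace d with (S (d-1)) at 1 by lia; simpl; ring).
      rewrite H. reflexivity. }
  assert (HDn : INR d <> 0) by (apply not_0_INR; lia).
  assert (HDp : 0 < INR d) by (apply lt_0_INR; lia).
  assert (HPI := PI_RGT_0).
  assert (Hrr : 0 < rho r) by (apply Hpos; auto).
  split.
  - intros Hg2. set (k := 2 - gamma). set (c := 2*PI/INR d*(k/gamma)).
    assert (Hk : 0 < k) by (unfold k; lra).
    assert (Hcp : 0 <= c) by (unfold c; apply Rmult_le_pos; [unfold Rdiv; apply Rmult_le_pos; [lra|apply Rlt_le, Rinv_0_lt_compat; lra] | apply Rlt_le; unfold Rdiv; apply Rmult_lt_0_compat; [lra|apply Rinv_0_lt_compat; lra]]).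
    assert (Hm : exp (-k * ln (g 0)) - c*0^2 <= exp (-k * ln (g r)) - c*r^2).
    { apply (mono_lemma (fun x => exp (-k * ln (g x)) - c*x^2)
        (fun x => exp (-k/gamma * ln (Rpower (rho x) gamma)) * (-k/gamma * ((- rho x * LE_mass d rho x / x^(d-1)) / Rpower (rho x) gamma)) - c*(2*x))); auto.
      - intros x hx. apply (is_derive_ext_loc (fun t => exp (-k/gamma * ln (Rpower (rho t) gamma)) - c*t^2)).
        + apply (filter_imp (fun u => 0 < u)). intros u hu. rewrite Hgeq by lra.
          replace (ln (Rpower (rho u) gamma)) with (gamma * ln (rho u)) by (unfold Rpower; rewrite ln_exp; reflexivity).
          replace (-k/gamma*(gamma*ln (rho u))) with (-k*ln (rho u)) by (field; lra). reflexivity.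
          apply open_gt; lra.
        + apply (deriv_H1 (fun t => Rpower (rho t) gamma) x _ (-k/gamma) c). apply HD; [lra| apply Hlt; lra]. unfold Rpower; apply exp_pos.
      - intros x hx. apply cont1. apply Hgc; lra. apply Hgpos; lra.
      - intros x hx.
        assert (hp : 0 < rho x) by (apply Hpos; [lra|apply Hlt; lra]).
        set (L := ln (rho x)).
        assert (HL : exp L = rho x) by (apply exp_ln; auto).
        assert (HP : Rpower (rho x) gamma = exp (gamma*L)) by reflexivity.
        rewrite HP, ln_exp.
        assert (He : exp (-k*L) * / exp (gamma*L) * rho x * rho x = 1).
        { rewrite <- HL. replace (-k*L) with (-(2*L) + gamma*L) by (unfold k; ring).
          rewrite exp_plus. replace (exp (-(2*L)) * exp (gamma*L) * / exp (gamma*L) * exp L * exp L)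
            with (exp (-(2*L)) * (exp L * exp L)) by (field; apply Rgt_not_eq, exp_pos).
          rewrite <- exp_plus, <- exp_plus. replace (-(2*L) + (L+L)) with 0 by ring. apply exp_0. }
        assert (Hal := alg1 (k/gamma) (exp (-k*L) * / exp (gamma*L)) (rho x) (LE_mass d rho x) (x^(d-1)) x (INR d)
          ltac:(unfold Rdiv; apply Rmult_lt_0_compat; [lra|apply Rinv_0_lt_compat; lra]) hp
          ltac:(apply pow_lt; lra) ltac:(lra) HDp He (Hmlb x ltac:(lra))).
        eapply Rle_trans; [apply Hal|]. right.
        replace (-k/gamma*(gamma*L)) with (-k*L) by (field; lra). unfold c.
        field; repeat split; try lra; try (apply Rgt_not_eq, exp_pos); try (apply pow_nonzero; lra). }
    rewrite Hg0, (Hgeq r Hr) in Hm.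
    set (S := Rpower rho0 (-k) + c*r^2).
    assert (HS : S <= exp (-k * ln (rho r))).
    { unfold S, Rpower. replace (-k*ln rho0) with (-k * ln rho0) by ring. simpl in Hm. lra. }
    assert (HSp : 0 < S) by (unfold S, Rpower; generalize (exp_pos (-k*ln rho0)); assert (0 <= c*r^2) by (apply Rmult_le_pos; [lra|apply pow_le; lra]); lra).
    assert (HlS : ln S <= -k * ln (rho r)) by (rewrite <- (ln_exp (-k * ln (rho r))); apply ln_le; auto).
    change (rho r <= Rpower S (- (1 / k))). unfold Rpower.
    rewrite <- (exp_ln (rho r)) at 1 by auto. apply exp_le_mono.
    apply (Rmult_le_reg_l k); [lra|]. replace (k * (-(1/k) * ln S)) with (- ln S) by (field; lra). lra.
  - intros Hg2. set (c2 := 2*PI/INR d*(1/gamma)).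
    assert (Hm : - ln (g 0) - c2*0^2 <= - ln (g r) - c2*r^2).
    { apply (mono_lemma (fun x => - ln (g x) - c2*x^2)
        (fun x => -(/gamma * ((- rho x * LE_mass d rho x / x^(d-1)) / Rpower (rho x) gamma)) - c2*(2*x))); auto.
      - intros x hx. apply (is_derive_ext_loc (fun t => -(/gamma * ln (Rpower (rho t) gamma)) - c2*t^2)).
        + apply (filter_imp (fun u => 0 < u)). intros u hu. rewrite Hgeq by lra.
          replace (ln (Rpower (rho u) gamma)) with (gamma * ln (rho u)) by (unfold Rpower; rewrite ln_exp; reflexivity).
          replace (/gamma*(gamma*ln (rho u))) with (ln (rho u)) by (field; lra). reflexivity.
          apply open_gt; lra.
        + apply (deriv_H2 (fun t => Rpower (rho t) gamma) x _ (/gamma) c2). apply HD; [lra| apply Hlt; lra]. unfold Rpower; apply exp_pos.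
      - intros x hx. apply cont2. apply Hgc; lra. apply Hgpos; lra.
      - intros x hx.
        assert (hp : 0 < rho x) by (apply Hpos; [lra|apply Hlt; lra]).
        set (L := ln (rho x)).
        assert (HL : exp L = rho x) by (apply exp_ln; auto).
        assert (HP : Rpower (rho x) gamma = exp (gamma*L)) by reflexivity.
        rewrite HP.
        assert (He : / exp (gamma*L) * rho x * rho x = 1).
        { rewrite <- HL. rewrite Hg2. replace (2*L) with (L+L) by ring. rewrite exp_plus.
          field. apply Rgt_not_eq, exp_pos. }
        assert (Hal := alg1 (/gamma) (/ exp (gamma*L)) (rho x) (LE_mass d rho x) (x^(d-1)) x (INR d)
          ltac:(apply Rinv_0_lt_compat; lra) hp
          ltac:(apply pow_lt; lra) ltac:(lra) HDp He (Hmlb x ltac:(lra))).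
        eapply Rle_trans; [apply Hal|]. right. unfold c2.
        field; repeat split; try lra; try (apply Rgt_not_eq, exp_pos); try (apply pow_nonzero; lra). }
    rewrite Hg0, (Hgeq r Hr) in Hm. simpl in Hm.
    rewrite <- (exp_ln (rho r)) at 1 by auto. apply exp_le_mono.
    change (2 * PI / INR d * (1 / gamma)) with c2. lra.
Qed.
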